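(* If on an infinite graph $\mathcal{G}$ one has $\mu(b)\le A^{b}$ for all $b\ge\bar{b}$ (for some $\bar b$ and some constant $A>0$), then the ferromagnetic Ising model on $\mathcal{G}$ exhibits spontaneous magnetization at large enough $\beta$ (low enough temperature), i.e. $\langle |M|\rangle$ is bounded below by a positive constant uniformly in the size of the finite subgraphs.
   Context: Let $\mathcal{G}=(\mathcal{P},\mathcal{L})$ be a connected graph with countable vertex set $\mathcal{P}$ and unoriented bond set $\mathcal{L}$, whose coordination numbers are uniformly bounded ($z_i\le z_{Max}$ for all $i$). On it consider the ferromagnetic Ising model with spins $\sigma_i=\pm1$, Hamiltonian $\mathcal{H}=-\sum_{(i,j)} J_{ij}\sigma_i\sigma_j$ (zero external field), with couplings $J_{ij}=J_{ji}$, $0\le J_{ij}<J_{Max}<\infty$, $J_{ij}>0$ iff $(i,j)\in\mathcal{L}$, and $J_{min}>0$ the minimal coupling on bonds. The quantity studied is the modulus of the magnetization $\langle |M|\rangle=\mathcal{Z}^{-1}\sum_{\{\sigma\}}\frac{|\sum_j\sigma_j|}{|\mathcal{P}|}e^{-\beta\mathcal{H}}$, computed on finite subgraphs $\mathcal{G}_N$ of $\mathcal{G}$ and taken in the limit $N\to\infty$. A border is a set of bonds separating the graph into exactly two connected subgraphs (every path from one part to the other uses a bond of the set, and each part is connected without using bonds of the set). For a finite subgraph with external points $\mathcal{E}$ (vertices having a bond to the outside), a border is closed if one of the two parts contains no external point, open otherwise; a vertex $p$ is ''inside'' a border if it lies in the internal part (for closed borders, the part not meeting $\mathcal{E}$;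 for open borders, the smaller part, ties broken by spin sign). $\mu^p(b)$ denotes the number of possible borders made of $b$ links that contain the vertex $p$ inside, and $\mu(b)=\sup_p\mu^p(b)$. *)

(* Defs.v *)
From HB Require Import structures.
From mathcomp Require Import all_boot all_order all_algebra.
From mathcomp Require Import finmap.
From mathcomp Require Import boolp reals.
From mathcomp Require Import sequences.
Set Implicit Arguments. Unset Strict Implicit. Unset Printing Implicit Defensive.
Import Order.TTheory GRing.Theory Num.Theory.
Local Open Scope ring_scope.
Local Open Scope fset_scope.

Section Graph.
Variable V : choiceType.
Variable adj : rel V.

Definition graph_connected : Prop :=
  forall x y : V, exists s : seq V, path adj x s && (last x s == y).

Definition induced_connected (S : {fset V}) : Prop :=
  forall x y : S, connect (fun a b : S => adj (val a) (val b)) x y.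

Definition external (S : {fset V}) (v : S) : bool :=
  `[< exists w : V, w \notin S /\ adj (val v) w >].

Definition adjIn (S : {fset V}) (P : {set S}) : rel S :=
  fun x y => [&& x \in P, y \in P & adj (val x) (val y)].

Definition connected_part (S : {fset V}) (P : {set S}) : bool :=
  [forall x in P, forall y in P, connect (adjIn P) x y].

(* the set of bonds of S joining P to its complement in S (each unordered bond
   recorded once, oriented from P outwards) *)
Definition cut (S : {fset V}) (P : {set S}) : {set S * S} :=
  [set e : S * S | [&& e.1 \in P, e.2 \notin P & adj (val e.1) (val e.2)]].

(* cut P is a border: it separates S into exactly the two connected parts
   P and S \ P, both nonempty *)
Definition border_part (S : {fset V}) (P : {set S}) : bool :=
  [&& P != set0, ~: P != set0, connected_part P & connected_part (~: P)].

Definition closed_part (S : {fset V}) (P : {set S}) : bool :=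
  [forall x in P, ~~ external x].

(* P is (possibly) the internal part of the border cut P and contains p:
   - closed border: P is the part with no external point;
   - open border (both parts meet the external points): P is the smaller part,
     ties (which the paper breaks by spin sign) counted as possibly inside. *)
Definition inside_part (S : {fset V}) (p : S) (P : {set S}) : bool :=
  [&& border_part P, p \in P &
      closed_part P ||
      [&& ~~ closed_part P, ~~ closed_part (~: P) & (#|P| <= #|~: P|)%N]].

(* mu^p(b) on the finite subgraph S: number of possible borders made of b
   links containing p inside (a border is determined by its internal part) *)
Definition mu_p (S : {fset V}) (p : S) (b : nat) : nat :=
  #|[set P : {set S} | inside_part p P && (#|cut P| == b)]|.

End Graph.

Section Ising.
Variable R : realType.
Variable V : choiceType.
Variable J : V -> V -> R.

Definition spin (S : {fset V}) (sigma : {ffun S -> bool}) (x : S) : R :=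
  if sigma x then 1 else -1.

(* H = - sum over unordered bonds (i,j) of J_ij s_i s_j  (= half the sum over
   ordered pairs, since J is symmetric and J_ii = 0) *)
Definition hamiltonian (S : {fset V}) (sigma : {ffun S -> bool}) : R :=
  - (2^-1 * \sum_(i : S) \sum_(j : S)
        J (val i) (val j) * spin sigma i * spin sigma j).

Definition boltz (beta : R) (S : {fset V}) (sigma : {ffun S -> bool}) : R :=
  expR (- (beta * hamiltonian sigma)).

Definition partition_fn (beta : R) (S : {fset V}) : R :=
  \sum_(sigma : {ffun S -> bool}) boltz beta sigma.

(* <|M|> on the finite subgraph S, free boundary conditions *)
Definition avg_absM (beta : R) (S : {fset V}) : R :=
  (\sum_(sigma : {ffun S -> bool})
      (`| \sum_(j : S) spin sigma j | / (#|{: S}|)%:R) * boltz beta sigma)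
  / partition_fn beta S.

End Ising.

(* Main.v *)
Require Import Defs.
From HB Require Import structures.
From mathcomp Require Import all_boot all_order all_algebra.
From mathcomp Require Import finmap.
From mathcomp Require Import boolp reals.
From mathcomp Require Import sequences.
From mathcomp Require Import exp ring lra.
Set Implicit Arguments. Unset Strict Implicit. Unset Printing Implicit Defensive.
Import Order.TTheory GRing.Theory Num.Theory.
Local Open Scope fset_scope.

Lemma connect_closed (T : finType) (e : rel T) (Q : pred T) :
  (forall a b, Q a -> e a b -> Q b) -> forall x y, Q x -> connect e x y -> Q y.
Proof.
move=> cl x y Qx /connectP [s pth ->].
elim: s x Qx pth => //= z s IH x Qx /andP[exz pth].
exact: IH (cl _ _ Qx exz) pth.
Qed.

Lemma connect_restr (T : finType) (e : rel T) (D : pred T) :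
  (forall a b, D a -> e a b -> D b) -> forall x y, D x -> connect e x y ->
  connect (fun a b => [&& D a, D b & e a b]) x y.
Proof.
move=> cl x y Dx cxy.
suff /andP[] : D y && connect (fun a b => [&& D a, D b & e a b]) x y by [].
apply: (connect_closed (Q := fun a => D a && connect (fun a b => [&& D a, D b & e a b]) x a)) cxy.
  move=> a b /andP[Da cxa] eab; have Db := cl _ _ Da eab.
  rewrite Db /=; apply: connect_trans cxa (connect1 _); by rewrite Da Db.
by rewrite Dx connect0.
Qed.

Section Comb.
Variable V : choiceType.
Variable adj : rel V.
Hypothesis adj_sym : forall i j, adj i j = adj j i.
Variable S : {fset V}.
Hypothesis Sconn : induced_connected adj S.

Definition unsat (sigma : {ffun S -> bool}) (P : {set S}) : bool :=
  [forall e in Defs.cut adj P, sigma e.1 != sigma e.2].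

Lemma adjIn_sym (P : {set S}) : symmetric (adjIn adj P).
Proof. by move=> x y; rewrite /adjIn adj_sym; case: (x \in P); case: (y \in P). Qed.

Lemma crossing (P : {set S}) : P != set0 -> ~: P != set0 ->
  exists x y, [/\ x \in P, y \notin P & adj (val x) (val y)].
Proof.
case/set0Pn=> x0 Px0; case/set0Pn=> y0; rewrite inE => Py0.
case: (pickP [pred xy : S * S | [&& xy.1 \in P, xy.2 \notin P & adj (val xy.1) (val xy.2)]]).
  by move=> [x y] /= /and3P[]; exists x, y.
move=> none; exfalso; move/negP: Py0; apply.
apply: (connect_closed (Q := fun a => a \in P)) (Sconn x0 y0) => //.
move=> a b Pa ab; apply/negPn/negP=> nPb.
by have := none (a, b); rewrite /= Pa nPb ab.
Qed.

Lemma cut_nonempty (P : {set S}) : border_part adj P -> (0 < #|Defs.cut adj P|)%N.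
Proof.
case/and4P=> P0 P1 _ _; have [x [y [Px Py a]]] := crossing P0 P1.
apply/card_gt0P; exists (x, y); by rewrite inE /= Px Py a.
Qed.

Section Sigma.
Variable sigma : {ffun S -> bool}.
Variables p q : S.
Hypothesis spq : sigma p != sigma q.

Let es : rel S := fun a b => adj (val a) (val b) && (sigma a == sigma b).
Let C : {set S} := [set y | connect es p y].
Let nC : {set S} := ~: C.
Let D : {set S} := [set y | connect (adjIn adj nC) q y].

Let C_closed a b : a \in C -> es a b -> b \in C.
Proof. rewrite !inE => ca eab; exact: connect_trans ca (connect1 eab). Qed.

Let C_sig y : y \in C -> sigma y = sigma p.
Proof.
rewrite inE => cy; apply/eqP.
apply: (connect_closed (Q := fun a => sigma a == sigma p)) cy => //.
by move=> a b /eqP <- /andP[_ /eqP ->].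
Qed.

Let qnC : q \in nC.
Proof. by rewrite inE; apply/negP => /C_sig e; move: spq; rewrite e eqxx. Qed.

Let D_nC y : y \in D -> y \in nC.
Proof.
rewrite inE => cy; apply: (connect_closed (Q := fun a => a \in nC)) cy => //.
by move=> a b _ /and3P[].
Qed.

Let D_closed a b : a \in D -> adjIn adj nC a b -> b \in D.
Proof. rewrite !inE => ca eab; exact: connect_trans ca (connect1 eab). Qed.

Let F4 x y : x \in D -> y \notin D -> adj (val x) (val y) ->
  y \in C /\ sigma x != sigma y.
Proof.
move=> Dx nDy axy; have nCx := D_nC Dx.
have Cy : y \in C.
  apply/negPn/negP => nCy; move/negP: nDy; apply.
  apply: (D_closed Dx); by rewrite /adjIn nCx inE nCy axy.
split=> //; apply/negP => /eqP exy.
move: nCx; rewrite inE; move/negP; apply.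
apply: (C_closed Cy); by rewrite /es adj_sym axy exy eqxx.
Qed.

Let unsatD : unsat sigma D.
Proof.
apply/forall_inP => [[x y]]; rewrite inE /= => /and3P[Dx nDy axy].
by case: (F4 Dx nDy axy).
Qed.

Let unsatnD : unsat sigma (~: D).
Proof.
apply/forall_inP => [[x y]]; rewrite inE /= !in_setC negbK => /and3P[nDx Dy axy].
rewrite adj_sym in axy; case: (F4 Dy nDx axy) => _; by rewrite eq_sym.
Qed.

Let qD : q \in D.
Proof. by rewrite inE connect0. Qed.

Let pnD : p \notin D.
Proof.
apply/negP => /D_nC; rewrite inE => /negP; apply; by rewrite inE connect0.
Qed.

Let C_nD y : y \in C -> y \in ~: D.
Proof. move=> Cy; rewrite inE; apply/negP => /D_nC; by rewrite inE Cy. Qed.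

Let connD : connected_part adj D.
Proof.
have H y : y \in D -> connect (adjIn adj D) q y.
  move=> Dy; have := @connect_restr _ (adjIn adj nC) (fun a => a \in D) D_closed q y qD.
  rewrite inE in Dy => /(_ Dy) c; apply: connect_sub c => a b /and3P[Da Db /and3P[_ _ ab]].
  by apply: connect1; rewrite /adjIn Da Db.
apply/forall_inP => x Dx; apply/forall_inP => y Dy.
apply: connect_trans (H _ Dy); rewrite (sym_connect_sym (adjIn_sym D)); exact: H.
Qed.

Let connC u : u \in C -> connect (adjIn adj (~: D)) u p.
Proof.
move=> Cu; rewrite (sym_connect_sym (adjIn_sym _)).
have := @connect_restr _ es (fun a => a \in C) C_closed p u.
rewrite {1}/C inE connect0 => /(_ isT); rewrite inE in Cu => /(_ Cu) c.
apply: connect_sub c => a b /and3P[Ca Cb /andP[ab _]].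
by apply: connect1; rewrite /adjIn (C_nD Ca) (C_nD Cb).
Qed.

Let connnD : connected_part adj (~: D).
Proof.
have H u : u \in ~: D -> connect (adjIn adj (~: D)) u p.
  move=> nDu.
  pose U : {set S} := [set u | (u \in ~: D) && ~~ connect (adjIn adj (~: D)) u p].
  case: (set_0Vmem U) => [U0|[u0 Uu0]].
    apply/negPn/negP => nc.
    have : u \in U by rewrite inE nDu nc.
    by rewrite U0 inE.
  exfalso.
  have U0 : U != set0 by apply/set0Pn; exists u0.
  have U1 : ~: U != set0.
    apply/set0Pn; exists p; rewrite !inE negb_and negbK connect0 orbT //.
  have [x [y [Ux nUy axy]]] := crossing U0 U1.
  move: Ux; rewrite inE => /andP[nDx ncx].
  case: (boolP (y \in D)) => Dy.
    rewrite inE in nDx; rewrite adj_sym in axy.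
    case: (F4 Dy nDx axy) => Cx _.
    by move: ncx; rewrite connC.
  have nDy : y \in ~: D by rewrite inE.
  move: nUy; rewrite inE nDy /= negbK => cy.
  move/negP: ncx; apply; apply: connect_trans cy.
  by apply: connect1; rewrite /adjIn nDx nDy axy.
apply/forall_inP => x Dx; apply/forall_inP => y Dy.
apply: connect_trans (H _ Dx) _; rewrite (sym_connect_sym (adjIn_sym _)); exact: H.
Qed.

Lemma two_spins : exists P, unsat sigma P && (inside_part adj p P || inside_part adj q P).
Proof.
have bD : border_part adj D.
  rewrite /border_part connD connnD !andbT; apply/andP; split; apply/set0Pn.
    by exists q.
  by exists p; rewrite inE.
have bnD : border_part adj (~: D).
  rewrite /border_part connnD setCK connD !andbT; apply/andP; split; apply/set0Pn.
    by exists p; rewrite inE.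
  by exists q.
case: (boolP (closed_part adj D)) => cD.
  by exists D; rewrite unsatD /inside_part bD qD cD orbT.
case: (boolP (closed_part adj (~: D))) => cnD.
  by exists (~: D); rewrite unsatnD /inside_part bnD inE pnD cnD.
case: (leqP #|D| #|~: D|) => le.
  by exists D; rewrite unsatD /inside_part bD qD cD cnD le !orbT.
exists (~: D); rewrite unsatnD /inside_part bnD inE pnD cnD setCK cD /=.
by apply/orP; left; apply/orP; right; exact: ltnW.
Qed.

End Sigma.

Definition bad (sigma : {ffun S -> bool}) : {set S} :=
  [set p | [exists P, unsat sigma P && inside_part adj p P]].

Lemma bad_same (sigma : {ffun S -> bool}) j g :
  j \notin bad sigma -> g \notin bad sigma -> sigma j = sigma g.
Proof.
move=> nj ng; apply/eqP/negP => /negP ne.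
have [P /andP[u /orP[i|i]]] := two_spins ne.
  by move/negP: nj; apply; rewrite inE; apply/existsP; exists P; rewrite u i.
by move/negP: ng; apply; rewrite inE; apply/existsP; exists P; rewrite u i.
Qed.

Local Open Scope ring_scope.

Lemma spin_bound (R : realType) (sigma : {ffun S -> bool}) :
  (#|{: S}|%:R - 2 * #|bad sigma|%:R : R) <= `|\sum_(j : S) spin R sigma j|.
Proof.
set B := bad sigma.
have cB : (#|B| + #|~: B| = #|{: S}|)%N by rewrite cardsC.
case: (set_0Vmem (~: B)) => [G0 | [g Gg]].
  rewrite G0 cards0 addn0 in cB; rewrite -cB.
  apply: le_trans (normr_ge0 _); have := ler0n R #|B|; lra.
rewrite (bigID (fun j => j \in B)) /=.
set a := \sum_(i | _) _; set b := \sum_(i | _) _.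
have ea : `|a| <= #|B|%:R.
  apply: le_trans (ler_norm_sum _ _ _) _.
  rewrite (eq_bigl (fun j => j \in B)) // (eq_bigr (fun _ => 1)).
    by rewrite sumr_const.
  by move=> j _; rewrite /spin; case: (sigma j); rewrite ?normrN normr1.
have eb : `|b| = #|~: B|%:R.
  rewrite /b (eq_bigl (fun j => j \in ~: B)); last by move=> j; rewrite in_setC.
  rewrite (eq_bigr (fun _ => spin R sigma g)); last first.
    move=> j Gj; rewrite /spin (bad_same (j := j) (g := g)) //.
      by rewrite inE in Gj.
    by rewrite inE in Gg.
  rewrite sumr_const normrMn /spin; case: (sigma g); by rewrite ?normrN normr1.
have : `|b| <= `|a + b| + `|a|.
  by have := ler_normB (a + b) a; rewrite addrAC subrr add0r.
rewrite eb -cB natrD => h.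
lra.
Qed.

End Comb.

Local Open Scope ring_scope.

Lemma geom_sum (R : realType) (N : nat) :
  \sum_(b < N) (2^-1 : R) ^+ b = 2 - 2 * 2^-1 ^+ N.
Proof.
elim: N => [|N IH]; first by rewrite big_ord0 expr0; lra.
rewrite big_ord_recr /= IH exprS.
have : 0 <= (2^-1 : R) ^+ N by apply: exprn_ge0; lra.
lra.
Qed.

Lemma geom_bound (R : realType) (N : nat) (mu : nat -> R) (x y K : R) :
  0 <= K -> 0 <= y -> y <= 2^-1 -> mu 0%N = 0 ->
  (forall j, (0 < j)%N -> mu j * x ^+ j <= K * y ^+ j) ->
  \sum_(b < N) mu b * x ^+ b <= 4 * K * y.
Proof.
move=> K0 y0 yh mu0 hj.
apply: le_trans (_ : _ <= \sum_(b < N) 2 * K * y * 2^-1 ^+ b) _.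
  apply: ler_sum => [[[|k] hk]] _ /=.
    rewrite mu0 mul0r; apply: mulr_ge0; [apply: mulr_ge0 => //; lra|].
    by rewrite expr0; lra.
  apply: le_trans (hj k.+1 isT) _.
  have e : y ^+ k <= 2^-1 ^+ k by apply: lerXn2r => //; rewrite ?inE ?nnegrE //; lra.
  rewrite !exprS.
  have : 0 <= K * y by apply: mulr_ge0.
  have : 0 <= y ^+ k by apply: exprn_ge0.
  nra.
rewrite -mulr_sumr geom_sum.
have : 0 <= (2^-1 : R) ^+ N by apply: exprn_ge0; lra.
have : 0 <= K * y by apply: mulr_ge0.
nra.
Qed.

Section Therm.
Variable R : realType.
Variable V : choiceType.
Variable adj : rel V.
Hypothesis adj_sym : forall i j, adj i j = adj j i.
Variable J : V -> V -> R.
Hypothesis Jsym : forall i j, J i j = J j i.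
Hypothesis J0 : forall i j, ~~ adj i j -> J i j = 0.
Hypothesis Jnn : forall i j, 0 <= J i j.
Variable Jmin : R.
Hypothesis Jmin_adj : forall i j, adj i j -> Jmin <= J i j.
Variable S : {fset V}.

Definition flip (P : {set S}) (sigma : {ffun S -> bool}) : {ffun S -> bool} :=
  [ffun x => if x \in P then ~~ sigma x else sigma x].

Lemma flipK P : cancel (flip P) (flip P).
Proof. by move=> s; apply/ffunP => x; rewrite !ffunE; case: (x \in P); rewrite ?negbK. Qed.

Definition crossJ (P : {set S}) (i j : S) : R :=
  if (i \in P) != (j \in P) then J (val i) (val j) else 0.

Lemma ham_flip P sigma : unsat adj sigma P ->
  hamiltonian J (flip P sigma) = hamiltonian J sigma - \sum_i \sum_j crossJ P i j.
Proof.
move=> /forall_inP u.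
have pw i j : J (val i) (val j) * spin R (flip P sigma) i * spin R (flip P sigma) j
   = J (val i) (val j) * spin R sigma i * spin R sigma j + 2 * crossJ P i j.
  rewrite /spin /crossJ !ffunE.
  case Pi: (i \in P); case Pj: (j \in P) => /=; rewrite ?mulr0 ?addr0.
  - by case: (sigma i); case: (sigma j) => /=; rewrite ?mulrN ?mulr1 ?opprK.
  - case: (boolP (adj (val i) (val j))) => a; last by rewrite J0 // !mul0r mulr0 addr0.
    have := u (i, j); rewrite inE /= Pi Pj a => /(_ isT).
    by case: (sigma i); case: (sigma j) => //= _; rewrite ?mulrN ?mulr1 ?opprK; lra.
  - case: (boolP (adj (val i) (val j))) => a; last by rewrite J0 // !mul0r mulr0 addr0.
    have := u (j, i); rewrite inE /= Pi Pj adj_sym a => /(_ isT).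
    by case: (sigma i); case: (sigma j) => //= _; rewrite ?mulrN ?mulr1 ?opprK; lra.
  - by [].
rewrite /hamiltonian (eq_bigr (fun i => \sum_j (J (val i) (val j) * spin R sigma i * spin R sigma j + 2 * crossJ P i j))); last first.
  by move=> i _; apply: eq_bigr => j _; rewrite pw.
rewrite (eq_bigr (fun i => \sum_j J (val i) (val j) * spin R sigma i * spin R sigma j + \sum_j 2 * crossJ P i j)); last by move=> i _; rewrite big_split.
rewrite big_split /=.
have -> : \sum_i \sum_j 2 * crossJ P i j = 2 * \sum_i \sum_j crossJ P i j.
  by rewrite mulr_sumr; apply: eq_bigr => i _; rewrite mulr_sumr.
set X := \sum_i _; set Y := \sum_i _. lra.
Qed.

Lemma crossJ_lb P : Jmin *+ #|Defs.cut adj P| <= \sum_i \sum_j crossJ P i j.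
Proof.
apply: le_trans (_ : \sum_i \sum_j (if (i, j) \in Defs.cut adj P then J (val i) (val j) else 0) <= _).
  rewrite pair_bigA /= -big_mkcond /= -sumr_const.
  rewrite [X in _ <= X](eq_bigl (fun e => e \in Defs.cut adj P)); last by case.
  apply: ler_sum => [[i j]].
  by rewrite inE /= => /and3P[_ _ a]; exact: Jmin_adj.
apply: ler_sum => i _; apply: ler_sum => j _.
rewrite /crossJ inE /=; case: (i \in P); case: (j \in P) => //=; rewrite ?Jnn //.
by case: (adj _ _).
Qed.


Lemma inside_sum (p : S) (z : R) :
  \sum_(P | inside_part adj p P) z ^+ #|Defs.cut adj P| =
  \sum_(b < #|{: S * S}|.+1) (mu_p adj p b)%:R * z ^+ b.
Proof.
have ltc (P : {set S}) : (#|Defs.cut adj P| < #|{: S * S}|.+1)%N by rewrite ltnS max_card.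
rewrite (partition_big (fun P => inord #|Defs.cut adj P| : 'I_(#|{: S * S}|.+1)) predT) //=.
apply: eq_bigr => j _.
rewrite (eq_bigl (fun P => P \in [set P | inside_part adj p P && (#|Defs.cut adj P| == j)])); last first.
  move=> P; rewrite inE; case: (inside_part adj p P) => //=.
  apply/eqP/eqP => [<-|->]; first by rewrite inordK.
  by rewrite inord_val.
rewrite (eq_bigr (fun _ => z ^+ j)); last by move=> P; rewrite inE => /andP[_ /eqP ->].
by rewrite sumr_const mulr_natl.
Qed.

Variable beta : R.
Hypothesis beta0 : 0 <= beta.
Let x := expR (- (beta * Jmin)).

Lemma boltz_flip P sigma : unsat adj sigma P ->
  boltz J beta sigma <= x ^+ #|Defs.cut adj P| * boltz J beta (flip P sigma).
Proof.
move=> u; rewrite /boltz ham_flip //.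
set H := hamiltonian J sigma; set Y := \sum_i _.
have -> : - (beta * H) = - (beta * (H - Y)) + - (beta * Y) by ring.
rewrite expRD mulrC ler_wpM2r ?(ltW (expR_gt0 _)) //.
rewrite /x -expRM_natl ler_expR.
have h := crossJ_lb P; rewrite -mulr_natr -/Y in h.
set b := (#|_|%:R : R) in h *.
have b0 : 0 <= b by rewrite /b ler0n.
have hh : 0 <= beta * (Y - Jmin * b) by apply: mulr_ge0 => //; rewrite subr_ge0.
nra.
Qed.

Lemma unsat_mass (P : {set S}) :
  \sum_(sigma | unsat adj sigma P) boltz J beta sigma <=
  x ^+ #|Defs.cut adj P| * partition_fn J beta S.
Proof.
apply: le_trans (ler_sum _ (fun s u => boltz_flip (P := P) (sigma := s) u)) _.
rewrite -mulr_sumr ler_wpM2l ?exprn_ge0 ?(ltW (expR_gt0 _)) //.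
rewrite /partition_fn [X in _ <= X](reindex_inj (can_inj (flipK P))) /=.
rewrite [X in _ <= X](bigID (fun s => unsat adj s P)) /= lerDl.
by apply: sumr_ge0 => s _; apply: ltW; apply: expR_gt0.
Qed.

Lemma bad_mass :
  \sum_(sigma : {ffun S -> bool}) #|bad adj sigma|%:R * boltz J beta sigma <=
  \sum_(p : S) (\sum_(P | inside_part adj p P) x ^+ #|Defs.cut adj P|) * partition_fn J beta S.
Proof.
have w0 s : 0 <= boltz J beta s by apply: ltW; apply: expR_gt0.
rewrite (eq_bigr (fun s => \sum_p (if p \in bad adj s then boltz J beta s else 0))); last first.
  by move=> s _; rewrite -big_mkcond sumr_const mulr_natl.
rewrite exchange_big /=; apply: ler_sum => p _.
rewrite mulr_suml.
apply: le_trans (_ : _ <= \sum_(P | inside_part adj p P) \sum_(s | unsat adj s P) boltz J beta s) _; last first.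
  by apply: ler_sum => P _; apply: unsat_mass.
rewrite (eq_bigr (fun P => \sum_s (if unsat adj s P then boltz J beta s else 0))); last first.
  by move=> P _; rewrite big_mkcond.
rewrite (exchange_big_dep predT) //=; apply: ler_sum => s _.
case: ifP => [|_]; last by apply: sumr_ge0 => P _; case: ifP.
rewrite inE => /existsP [P0 /andP[u0 i0]].
rewrite (bigD1 P0); last by rewrite i0.
rewrite /= u0 lerDl.
by apply: sumr_ge0 => P _; case: ifP.
Qed.
End Therm.

Local Open Scope fset_scope.
Local Open Scope ring_scope.

Lemma main_aux (R : realType) (V : countType) (adj : rel V)
    (J : V -> V -> R) (Gs : nat -> {fset V}) :
  (forall i, ~~ adj i i) ->
  (forall i j, adj i j = adj j i) ->
  graph_connected adj ->
  (forall S : {fset V}, exists v, v \notin S) ->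
  (exists zmax : nat, forall i, exists N : {fset V},
      (forall j, adj i j -> j \in N) /\ (#|` N| <= zmax)%N) ->
  (forall i j, J i j = J j i) ->
  (exists Jmax : R, forall i j, 0 <= J i j /\ J i j < Jmax) ->
  (forall i j, (0 < J i j) = adj i j) ->
  (exists Jmin : R, 0 < Jmin /\ forall i j, adj i j -> Jmin <= J i j) ->
  (forall n, Gs n != fset0) ->
  (forall n, Gs n `<=` Gs n.+1) ->
  (forall v, exists n, v \in Gs n) ->
  (forall n, induced_connected adj (Gs n)) ->
  (forall b : nat, exists Mb : nat, forall n (p : Gs n), (mu_p adj p b <= Mb)%N) ->
  (exists A : R, 0 < A /\ exists bbar : nat, forall b : nat, (bbar <= b)%N ->
      forall n (p : Gs n), (mu_p adj p b)%:R <= A ^+ b) ->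
  exists beta0 : R, forall beta : R, beta0 < beta ->
    exists c : R, 0 < c /\ forall n, c <= avg_absM J beta (Gs n).
Proof.
move=> _ Hsym _ _ _ _ [Jmax HJ] HJpos [Jmin [Jmin0 HJmin]] Hne _ _ Hic HM [A [A0 [bbar Hbar]]].
have Jnn i j : 0 <= J i j := (HJ i j).1.
have J0 i j : ~~ adj i j -> J i j = 0.
  move=> na; have := Jnn i j; rewrite le_eqVlt HJpos (negbTE na) orbF.
  by move/eqP <-.
have Kex m : exists Kn : nat, forall b, (b < m)%N -> forall n (p : Gs n), (mu_p adj p b <= Kn)%N.
  elim: m => [|m [Kn IH]]; first by exists 0%N.
  have [Mm HMm] := HM m; exists (maxn Kn Mm) => b; rewrite ltnS leq_eqVlt => /orP[/eqP->|lt] n p.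
    exact: leq_trans (HMm n p) (leq_maxr _ _).
  exact: leq_trans (IH b lt n p) (leq_maxl _ _).
have [Kn HKn] := Kex bbar.
pose K : R := (Kn.+1)%:R.
pose A1 := (A + 1)%R.
have K1 : 1 <= K by rewrite /K ler1n.
have A11 : 1 <= A1 by rewrite /A1; lra.
have muK n (p : Gs n) b : (mu_p adj p b)%:R <= K * A1 ^+ b.
  have e1 : 1 <= A1 ^+ b by apply: exprn_ege1.
  case: (ltnP b bbar) => hb.
    apply: le_trans (_ : K <= _); last by apply: ler_peMr => //; lra.
    by rewrite /K ler_nat; apply: leq_trans (HKn b hb n p) _.
  apply: le_trans (Hbar b hb n p) _.
  apply: le_trans (_ : A1 ^+ b <= _); last by apply: ler_peMl => //; lra.
  by apply: lerXn2r; rewrite ?inE ?nnegrE /A1 //; lra.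
exists (16 * K * A1 / Jmin) => beta hbeta.
have tJ : 16 * K * A1 < beta * Jmin by rewrite -ltr_pdivrMr.
have bpos : 0 < beta.
  have : 0 < 16 * K * A1 by apply: mulr_gt0; [apply: mulr_gt0|]; lra.
  move=> h; have := lt_trans h tJ; rewrite pmulr_lgt0 //.
pose x := expR (- (beta * Jmin)).
have x0 : 0 <= x by apply: ltW; apply: expR_gt0.
have xe : x * (1 + beta * Jmin) <= 1.
  have h1 := expR_ge1Dx (beta * Jmin).
  apply: le_trans (_ : x * expR (beta * Jmin) <= 1).
    by apply: ler_wpM2l.
  by rewrite /x expRN mulVf // gt_eqF // expR_gt0.
pose y := A1 * x.
have y0 : 0 <= y by rewrite /y; apply: mulr_ge0 => //; lra.
have y16 : 16 * K * y <= 1.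
  rewrite /y; have : 0 <= 16 * K * A1 by apply: mulr_ge0; [apply: mulr_ge0|]; lra.
  nra.
have yh : y <= 2^-1 by nra.
exists 2^-1; split; first by lra.
move=> n.
set S := Gs n.
have mu0 (p : S) : mu_p adj p 0 = 0%N.
  apply/eqP; rewrite cards_eq0; apply/eqP/setP => P; rewrite !inE.
  apply/negbTE; apply/negP => /andP[/and3P[bP _ _] /eqP c0].
  by have := cut_nonempty (Hic n) bP; rewrite c0.
have ins (p : S) : \sum_(P | inside_part adj p P) x ^+ #|Defs.cut adj P| <= 4 * K * y.
  rewrite inside_sum; apply: (@geom_bound R _ (fun b => (mu_p adj p b)%:R)) => //. all: try (by rewrite mu0).
  move=> j _; rewrite /y exprMn mulrA.
  by apply: ler_wpM2r; [apply: exprn_ge0 | apply: muK].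
have w0 s : 0 < boltz J beta s by apply: expR_gt0.
have Z0 : 0 < partition_fn J beta S.
  pose s0 : {ffun S -> bool} := [ffun=> true].
  rewrite /partition_fn (bigD1 s0) //=.
  apply: (lt_le_trans (w0 _ s0)); rewrite lerDl; apply: sumr_ge0 => s _; exact: ltW.
set Z := partition_fn J beta S in Z0 *.
have nS0 : 0 < (#|{: S}|%:R : R).
  have [v vS] : exists v, v \in S by apply/fset0Pn; apply: Hne.
  rewrite ltr0n; apply/card_gt0P; by exists [` vS].
set nS := (#|{: S}|%:R : R) in nS0 *.
pose E := \sum_(sigma : {ffun S -> bool}) #|bad adj sigma|%:R * boltz J beta sigma.
have HE : E <= nS * (4 * K * y * Z).
  apply: le_trans (bad_mass Hsym J0 Jnn HJmin S (ltW bpos)) _.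
  apply: (@le_trans _ _ (\sum_(p : S) 4 * K * y * Z)).
    by apply: ler_sum => p _; apply: ler_wpM2r; [exact: ltW|apply: ins].
  rewrite sumr_const (@eq_card _ _ (pred_of_argType S)) // -[X in X <= _]mulr_natl. by [].
have HN : Z - 2 / nS * E <= \sum_(sigma : {ffun S -> bool})
      (`| \sum_(j : S) spin R sigma j | / nS) * boltz J beta sigma.
  rewrite /E mulr_sumr /Z /partition_fn -sumrB; apply: ler_sum => s _.
  have sb := spin_bound Hsym (Hic n) R s.
  rewrite -/nS in sb.
  set b := (#|bad adj s|%:R : R) in sb *; set w := boltz J beta s.
  set m := `| _ | in sb *.
  have -> : w - 2 / nS * (b * w) = ((nS - 2 * b) / nS) * w.
    by field; rewrite gt_eqF.
  apply: ler_wpM2r; first exact: ltW (w0 _ s).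
  by rewrite ler_pM2r ?invr_gt0.
have h3 : 2 / nS * E <= 2 * (4 * K * y * Z).
  apply: le_trans (_ : 2 / nS * (nS * (4 * K * y * Z)) <= _).
    by apply: ler_wpM2l => //; apply: divr_ge0 => //; exact: ltW.
  have -> : 2 / nS * (nS * (4 * K * y * Z)) = 2 * (4 * K * y * Z) by field; rewrite gt_eqF.
  done.
rewrite /avg_absM -/Z -/nS ler_pdivlMr //.
apply: le_trans HN.
have h4 : 0 <= Z * (1 - 16 * K * y) by apply: mulr_ge0; [exact: ltW | lra].
nra.
Qed.

Unset Implicit Arguments.
Local Open Scope ring_scope.
Local Open Scope fset_scope.

Theorem theorem2 (R : realType) (V : countType) (adj : rel V)
    (J : V -> V -> R) (Gs : nat -> {fset V}) :
  (* G: simple, connected, infinite, bounded coordination *)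
  (forall i, ~~ adj i i) ->
  (forall i j, adj i j = adj j i) ->
  graph_connected adj ->
  (forall S : {fset V}, exists v, v \notin S) ->
  (exists zmax : nat, forall i, exists N : {fset V},
      (forall j, adj i j -> j \in N) /\ (#|` N| <= zmax)%N) ->
  (* ferromagnetic couplings *)
  (forall i j, J i j = J j i) ->
  (exists Jmax : R, forall i j, 0 <= J i j /\ J i j < Jmax) ->
  (forall i j, (0 < J i j) = adj i j) ->
  (exists Jmin : R, 0 < Jmin /\ forall i j, adj i j -> Jmin <= J i j) ->
  (* finite subgraphs G_N exhausting G *)
  (forall n, Gs n != fset0) ->
  (forall n, Gs n `<=` Gs n.+1) ->
  (forall v, exists n, v \in Gs n) ->
  (forall n, induced_connected adj (Gs n)) ->
  (* mu(b) = sup_p mu^p(b) is finite for every b ... *)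
  (forall b : nat, exists Mb : nat, forall n (p : Gs n), (mu_p adj p b <= Mb)%N) ->
  (* ... and mu(b) <= A^b for b >= bbar *)
  (exists A : R, 0 < A /\ exists bbar : nat, forall b : nat, (bbar <= b)%N ->
      forall n (p : Gs n), (mu_p adj p b)%:R <= A ^+ b) ->
  (* spontaneous magnetization at large beta *)
  exists beta0 : R, forall beta : R, beta0 < beta ->
    exists c : R, 0 < c /\ forall n, c <= avg_absM J beta (Gs n).
Proof. exact: main_aux. Qed.
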